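(* For any $\lambda>0$ and $n\ge 1$, $Z=\sum_{\sigma\in\Omega}\lambda^{-p(\sigma)}\geq(\sqrt{2}/\lambda)^{p_{max}}$, where $p_{max}=2n-2$.
   Context: Let $\Gamma$ be the triangular lattice. A configuration of $n$ particles is a set of $n$ vertices of $\Gamma$, considered up to translation. It is connected if the subgraph of $\Gamma$ induced by occupied vertices is connected; a hole is a maximal finite connected set of unoccupied vertices; $\Omega$ is the set of connected configurations of $n$ particles with no holes. For $\sigma\in\Omega$, $p(\sigma)$ is the length of the closed walk around its single external boundary, with an edge traversed twice counted twice. *)

(* Defs.v *)
From HB Require Import structures.
From mathcomp Require Import all_boot all_order all_algebra.
From mathcomp Require Import boolp.
Set Implicit Arguments. Unset Strict Implicit. Unset Printing Implicit Defensive.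
Import Order.TTheory GRing.Theory Num.Theory.

(* Vertices of the triangular lattice, in axial coordinates: (x,y) is the
   point x*(1,0) + y*(1/2, sqrt 3/2) of the plane. *)
Definition pt := (int * int)%type.

(* The six neighbour directions, in counterclockwise order
   (angles 0, 60, 120, 180, 240, 300 degrees); indices taken mod 6. *)
Definition dir (k : nat) : pt :=
  match (k %% 6)%N with
  | 0 => (1%R, 0%R)
  | 1 => (0%R, 1%R)
  | 2 => ((-1)%R, 1%R)
  | 3 => ((-1)%R, 0%R)
  | 4 => (0%R, (-1)%R)
  | _ => (1%R, (-1)%R)
  end.

Definition addp (p d : pt) : pt := ((p.1 + d.1)%R, (p.2 + d.2)%R).

Definition adj (p q : pt) : bool := [exists k : 'I_6, q == addp p (dir k)].

(* Configurations of n particles up to translation are represented by their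
   unique translate whose minimal x-coordinate and minimal y-coordinate are 0.
   A connected configuration of n particles then lies in [0,n-1]^2. *)
Definition Box (n : nat) := ('I_n * 'I_n)%type.

Definition emb n (a : Box n) : pt := (Posz (a.1 : nat), Posz (a.2 : nat)).

Definition occ n (A : {set Box n}) (p : pt) : bool := [exists a in A, emb a == p].

Definition normalized n (A : {set Box n}) : Prop :=
  (exists a, a \in A /\ (a.1 : nat) = 0%N) /\ (exists b, b \in A /\ (b.2 : nat) = 0%N).

Definition induced_rel n (A : {set Box n}) : rel (Box n) :=
  fun a b => [&& a \in A, b \in A & adj (emb a) (emb b)].

Definition config_connected n (A : {set Box n}) : Prop :=
  forall a b, a \in A -> b \in A -> connect (induced_rel A) a b.

Definition free_reach n (A : {set Box n}) (v w : pt) : Prop :=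
  ~~ occ A v /\
  exists s : seq pt, path (fun x y => adj x y && ~~ occ A y) v s /\ last v s = w.

(* A hole is a maximal finite connected set of unoccupied vertices, i.e. a
   finite connected component of the unoccupied vertices.  No holes: every
   unoccupied vertex lies in an infinite such component. *)
Definition hole_free n (A : {set Box n}) : Prop :=
  forall v : pt, ~~ occ A v ->
    ~ (exists s : seq pt, forall w, free_reach A v w -> w \in s).

Definition inOmega n (A : {set Box n}) : Prop :=
  #|A| = n /\ normalized A /\ config_connected A /\ hole_free A.

(* ---- Perimeter: the closed walk around the external boundary ----
   Face tracing in the plane embedding: arriving at v along the directed
   edge (u,v), the walk continues to the first occupied neighbour of v met
   when rotating counterclockwise around v starting from the direction of u
   (so the traced face stays on the right-hand side). *)
Definition back (v u : pt) : nat := find (fun k => u == addp v (dir k)) (iota 0 6).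

Definition nextdir n (A : {set Box n}) (v : pt) (k : nat) : nat :=
  (k + (find (fun i => occ A (addp v (dir (k + i)))) (iota 1 6)).+1)%N.

Definition next_edge n (A : {set Box n}) (e : pt * pt) : pt * pt :=
  (e.2, addp e.2 (dir (nextdir A e.2 (back e.2 e.1)))).

Definition low_vertex n (A : {set Box n}) : option (Box n) :=
  [pick a in A | [forall b in A,
     ((a.2 : nat) < b.2)%N || (((a.2 : nat) == b.2) && ((a.1 : nat) <= b.1)%N)]].

(* At the lowest-leftmost vertex v0 the directions 180,240,300 degrees lead to
   unoccupied vertices, and the outer face lies there; the first occupied
   neighbour counterclockwise from direction 300 degrees gives a directed
   edge of the external boundary walk (outer face on its right). *)
Definition start_edge n (A : {set Box n}) (v0 : Box n) : pt * pt :=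
  (emb v0, addp (emb v0) (dir (nextdir A (emb v0) 5))).

(* p(sigma): length of the closed boundary walk = length of the orbit of the
   start edge under face tracing (edges traversed twice counted twice);
   0 when there is no edge (single particle).  Orbit length <= #directed edges <= 6n. *)
Definition perim n (A : {set Box n}) : nat :=
  match low_vertex A with
  | None => 0%N
  | Some v0 =>
      let e0 := start_edge A v0 in
      if occ A e0.2 then
        (find (fun k => iter k.+1 (next_edge A) e0 == e0) (iota 0 (6 * #|A|))).+1
      else 0%N
  end.

(* Main.v *)
Require Import Defs.
From HB Require Import structures.
From mathcomp Require Import all_boot all_order all_algebra.
From mathcomp Require Import boolp reals.
From mathcomp Require Import zify.
Import Order.TTheory GRing.Theory Num.Theory.



Lemma dir_mod e : dir e = dir (e %% 6).
Proof. by rewrite /dir modn_mod. Qed.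

Lemma dir_inj i j : (i < 6)%N -> (j < 6)%N -> dir i = dir j -> i = j.
Proof.
by case: i => [|[|[|[|[|[|i]]]]]]; case: j => [|[|[|[|[|[|j]]]]]] //= _ _ [].
Qed.

Lemma addp_inj v d d' : addp v d = addp v d' -> d = d'.
Proof.
case: d d' => [a b] [c e]; rewrite /addp /= => -[h1 h2].
by congr pair; [apply: (addrI v.1 h1) | apply: (addrI v.2 h2)].
Qed.

Lemma addp_dir_eq v i j : (addp v (dir i) == addp v (dir j)) = (i %% 6 == j %% 6).
Proof.
apply/eqP/eqP => [h|h]; last by rewrite dir_mod h -dir_mod.
move/addp_inj: h; rewrite (dir_mod i) (dir_mod j).
by apply: dir_inj; apply: ltn_pmod.
Qed.

Lemma back_eq v b : (b < 6)%N -> back v (addp v (dir b)) = b.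
Proof.
move=> hb; rewrite /back.
rewrite (@eq_find _ _ (fun k => k %% 6 == b)); last first.
  by move=> k; rewrite addp_dir_eq (modn_small hb) eq_sym.
by case: b hb => [|[|[|[|[|[|b]]]]]].
Qed.

Lemma nextdir_eq n (A : {set Box n}) v k b c :
  (forall e, occ A (addp v (dir e)) = (e %% 6 == b) || (e %% 6 == c)) ->
  nextdir A v k = (k + (find (fun i => ((k+i) %% 6 == b) || ((k+i) %% 6 == c)) (iota 1 6)).+1)%N.
Proof. by move=> H; rewrite /nextdir (@eq_find _ _ (fun i => ((k+i) %% 6 == b) || ((k+i) %% 6 == c))) // => i; rewrite H. Qed.

Lemma next_edge_gen n (A : {set Box n}) v b c : (b < 6)%N -> (c < 6)%N ->
  (forall e, occ A (addp v (dir e)) = (e %% 6 == b) || (e %% 6 == c)) ->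
  next_edge A (addp v (dir b), v) = (v, addp v (dir c)).
Proof.
move=> hb hc H; rewrite /next_edge /= back_eq // (@nextdir_eq _ _ _ _ _ _ H).
congr (_, addp v _).
by clear H; case: b hb => [|[|[|[|[|[|b]]]]]] // _; case: c hc => [|[|[|[|[|[|c]]]]]].
Qed.



Fixpoint px (f : nat -> bool) (k : nat) : nat :=
  if k is k'.+1 then (px f k' + ~~ f k')%N else 0%N.
Fixpoint py (f : nat -> bool) (k : nat) : nat :=
  if k is k'.+1 then (py f k' + f k')%N else 0%N.

Lemma pxy f k : (px f k + py f k)%N = k.
Proof. by elim: k => //= k IH; case: (f k); rewrite ?addn0 ?addn1; lia. Qed.

Definition P f k : pt := (Posz (px f k), Posz (py f k)).

Lemma P_succ f k : P f k.+1 = addp (P f k) (dir (f k)).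
Proof.
rewrite /P /addp /=; case: (f k) => /=; rewrite ?addn0 ?addn1;
by congr pair; rewrite ?addr0 // -addn1.
Qed.

Lemma P_back f k : P f k = addp (P f k.+1) (dir (f k + 3)).
Proof.
rewrite /P /addp /=; case: (f k) => /=; rewrite ?addn0 ?addn1;
congr pair; rewrite ?addr0 //; lia.
Qed.

Lemma P_inj f j k : P f j = P f k -> j = k.
Proof. by rewrite /P => -[h1 h2]; rewrite -(pxy f j) -(pxy f k) h1 h2. Qed.

Lemma nbr f j k e : P f k = addp (P f j) (dir e) ->
  (k = j.+1 /\ e %% 6 = f j) \/ (j = k.+1 /\ e %% 6 = (f k + 3)%N).
Proof.
rewrite dir_mod; have : (e %% 6 < 6)%N by apply: ltn_pmod.
move: (e %% 6) => r.
have hj := pxy f j; have hk := pxy f k.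
rewrite /P /addp /=.
case: r => [|[|[|[|[|[|r]]]]]] //= _ [h1 h2].
- have ek : k = j.+1 by lia.
  subst k; left; split => //; move: h1 h2 => /=; case: (f j) => /=; lia.
- have ek : k = j.+1 by lia.
  subst k; left; split => //; move: h1 h2 => /=; case: (f j) => /=; lia.
- have ek : k = j by lia. subst k; lia.
- have ek : j = k.+1 by lia.
  subst j; right; split => //; move: h1 h2 => /=; case: (f k) => /=; lia.
- have ek : j = k.+1 by lia.
  subst j; right; split => //; move: h1 h2 => /=; case: (f k) => /=; lia.
- have ek : k = j by lia. subst k; lia.
Qed.



Definition node f m k : Box m.+1 := (inord (px f k), inord (py f k)).
Definition Aset f m : {set Box m.+1} := [set node f m (val k) | k : 'I_m.+1].

Lemma emb_node f m k : (k <= m)%N -> emb (node f m k) = P f k.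
Proof.
move=> hk; have := pxy f k => h.
by rewrite /emb /node /P /= !inordK //; lia.
Qed.

Lemma node_in f m k : (k <= m)%N -> node f m k \in Aset f m.
Proof. by move=> hk; apply/imsetP; exists (Ordinal (n:=m.+1) (m:=k) hk). Qed.

Lemma occP f m w : reflect (exists2 k, (k < m.+1)%N & w = P f k) (occ (Aset f m) w).
Proof.
apply: (iffP existsP) => [[a /andP[/imsetP[k _ ->] /eqP <-]]|[k hk ->]].
  exists (val k); first exact: (ltn_ord k).
  by rewrite emb_node // -ltnS (ltn_ord k).
have hk' : (k <= m)%N by rewrite -ltnS.
exists (node f m k). by rewrite node_in // emb_node // eqxx.
Qed.

Lemma occ_nbr f m j e : (j <= m)%N ->
  occ (Aset f m) (addp (P f j) (dir e)) =
  ((0 < j)%N && (e %% 6 == (f j.-1 + 3)%N)) || ((j < m)%N && (e %% 6 == f j)).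
Proof.
move=> hj; apply/occP/idP => [[k hk /esym/nbr [[e1 ->]|[e1 ->]]]|].
- by subst k; rewrite eqxx andbT orbC -ltnS hk.
- by subst j; rewrite eqxx.
case/orP => /andP[h1 /eqP h2].
  exists j.-1; first by lia.
  by rewrite dir_mod h2; move: h1; case: j {hj h2} => // j _ /=; rewrite [RHS]P_back.
exists j.+1 => //; by rewrite dir_mod h2 -P_succ.
Qed.



Definition F f j : pt * pt := (P f j, P f j.+1).
Definition B f j : pt * pt := (P f j.+1, P f j).

Lemma fb (b : bool) : (b < 6)%N. Proof. by case: b. Qed.
Lemma fb3 (b : bool) : (b + 3 < 6)%N. Proof. by case: b. Qed.

Lemma nextF f m j : (j.+1 <= m)%N ->
  next_edge (Aset f m) (F f j) = if (j.+1 < m)%N then F f j.+1 else B f j.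
Proof.
move=> hj; rewrite /F [in X in next_edge _ X]P_back.
case: ifP => hm.
  rewrite (@next_edge_gen _ _ _ _ (f j.+1) (fb3 _) (fb _)); first by rewrite -P_succ.
  by move=> e; rewrite occ_nbr // hm.
rewrite (@next_edge_gen _ _ _ _ (f j + 3) (fb3 _) (fb3 _)); first by rewrite -P_back.
by move=> e; rewrite occ_nbr // hm /= orbF orbb.
Qed.

Lemma nextB f m j : (j < m)%N ->
  next_edge (Aset f m) (B f j) = if (0 < j)%N then B f j.-1 else F f 0.
Proof.
move=> hj; rewrite /B [in X in next_edge _ X]P_succ.
have hj' : (j <= m)%N by apply: ltnW.
case: ifP => h0.
  rewrite (@next_edge_gen _ _ _ _ (f j.-1 + 3) (fb _) (fb3 _)).
    by case: j h0 {hj hj'} => // j _ /=; rewrite -P_back.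
  by move=> e; rewrite occ_nbr // h0 hj /= orbC.
rewrite (@next_edge_gen _ _ _ _ (f j) (fb _) (fb _)).
  by case: j h0 {hj hj'} => //; rewrite -P_succ.
by move=> e; rewrite occ_nbr // h0 hj /= orbb.
Qed.

Lemma card_Aset f m : #|Aset f m| = m.+1.
Proof.
rewrite /Aset card_imset ?card_ord // => k k' /(congr1 (@emb m.+1)).
have hk : (val k <= m)%N by rewrite -ltnS ltn_ord.
have hk' : (val k' <= m)%N by rewrite -ltnS ltn_ord.
by rewrite !emb_node // => /P_inj; exact: val_inj.
Qed.

Lemma node0 f m : emb (node f m 0) = (Posz 0, Posz 0).
Proof. by rewrite emb_node. Qed.

Lemma low_ok f m : exists v0, low_vertex (Aset f m) = Some v0 /\ emb v0 = P f 0.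
Proof.
rewrite /low_vertex; case: pickP => [a /andP[ha /forallP H]| H].
  exists a; split => //.
  have := H (node f m 0); rewrite node_in //= inordK // ltn0 /= => /andP[/eqP h1 h2].
  by rewrite /emb /P /= h1; move: h2; rewrite leqn0 => /eqP ->.
exfalso; move: (H (node f m 0)); rewrite node_in //=.
have e1 : ((node f m 0).1 : nat) = 0%N by rewrite /node /= inordK.
have e2 : ((node f m 0).2 : nat) = 0%N by rewrite /node /= inordK.
move/negP; apply; apply/forallP => b; apply/implyP => _.
rewrite /= inordK //; by case: (b.2 : nat).
Qed.

Lemma iterF f m k : (k < m)%N -> iter k (next_edge (Aset f m)) (F f 0) = F f k.
Proof.
elim: k => // k IH hk; rewrite iterS IH ?nextF //; [by rewrite hk | lia | lia].
Qed.

Lemma iterB f m i : (i < m)%N ->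
  iter (m + i) (next_edge (Aset f m)) (F f 0) = B f (m.-1 - i).
Proof.
elim: i => [|i IH] hi.
  case: m hi => // m _; rewrite addn0 iterS iterF // nextF //= ltnn subn0 //.
rewrite addnS iterS IH; last by lia.
rewrite nextB; last by lia.
have -> : (0 < m.-1 - i)%N = true by apply/idP; lia.
congr B; lia.
Qed.

Lemma iter_full f m : (0 < m)%N ->
  iter (2 * m) (next_edge (Aset f m)) (F f 0) = F f 0.
Proof.
move=> hm; have -> : (2 * m = (m + m.-1).+1)%N by lia.
by rewrite iterS iterB ?nextB; try lia; have -> : (m.-1 - m.-1 = 0)%N by lia.
Qed.

Lemma find_iota_eq (p : pred nat) L m : (m < L)%N -> p m ->
  (forall k, (k < m)%N -> ~~ p k) -> find p (iota 0 L) = m.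
Proof.
move=> hL pm H.
have hs : has p (iota 0 L) by apply/hasP; exists m => //; rewrite mem_iota.
have hf : (find p (iota 0 L) < L)%N by move: hs; rewrite has_find size_iota.
case: (ltngtP (find p (iota 0 L)) m) => // h.
  have := nth_find 0 hs; rewrite nth_iota // add0n => hp.
  by move: (H _ h); rewrite hp.
have := before_find 0 h; rewrite nth_iota // add0n pm //.
Qed.

Lemma perim_Aset f m : perim (Aset f m) = (2 * m)%N.
Proof.
case: m => [|m].
  have [v0 [hl he]] := low_ok f 0.
  by rewrite /perim hl /start_edge /= he occ_nbr.
have [v0 [hl he]] := low_ok f m.+1.
rewrite /perim hl /start_edge /= he.
set A := Aset f m.+1.
have Hocc : forall e, occ A (addp (P f 0) (dir e)) = (e %% 6 == f 0) || (e %% 6 == f 0).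
  by move=> e; rewrite occ_nbr //= orbb.
have hs : addp (P f 0) (dir (nextdir A (P f 0) 5)) = P f 1.
  rewrite (@nextdir_eq _ _ _ _ _ _ Hocc) P_succ; congr addp.
  by rewrite dir_mod; case: (f 0).
rewrite hs (_ : occ A (P f 1) = true); last by apply/occP; exists 1%N.
rewrite -/(F f 0) card_Aset (@find_iota_eq _ _ (2 * m.+1).-1).
- lia.
- lia.
- have e : ((2 * m.+1).-1).+1 = (2 * m.+1)%N by lia.
  by rewrite -iterS e iter_full.
move=> k hk; rewrite -iterS.
case: (ltnP k.+1 m.+1) => h.
  rewrite iterF // /F; apply/eqP => /(congr1 fst) /= /P_inj; lia.
have -> : k.+1 = (m.+1 + (k.+1 - m.+1))%N by lia.
rewrite iterB; last by lia.
rewrite /B /F; apply/eqP => /(congr1 fst) /= /P_inj; lia.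
Qed.



Lemma emb_node' f m (k : 'I_m.+1) : emb (node f m k) = P f k.
Proof. by rewrite emb_node // -ltnS ltn_ord. Qed.

Lemma adj_succ f i : adj (P f i) (P f i.+1).
Proof.
apply/existsP; exists (inord (f i)); rewrite inordK ?P_succ //.
by case: (f i).
Qed.

Lemma adj_pred f i : adj (P f i.+1) (P f i).
Proof.
apply/existsP; exists (inord (f i + 3)); rewrite inordK -?P_back //.
by case: (f i).
Qed.

Lemma conn0 f m i : (i <= m)%N ->
  connect (induced_rel (Aset f m)) (node f m 0) (node f m i) /\
  connect (induced_rel (Aset f m)) (node f m i) (node f m 0).
Proof.
elim: i => [|i IH] hi; first by split; apply: connect0.
have [h1 h2] := IH (ltnW hi).
have r1 : induced_rel (Aset f m) (node f m i) (node f m i.+1).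
  by rewrite /induced_rel !node_in ?(ltnW hi) //= !emb_node ?(ltnW hi) // adj_succ.
have r2 : induced_rel (Aset f m) (node f m i.+1) (node f m i).
  by rewrite /induced_rel !node_in ?(ltnW hi) //= !emb_node ?(ltnW hi) // adj_pred.
split.
  by apply: connect_trans h1 (connect1 r1).
by apply: connect_trans (connect1 r2) h2.
Qed.

Lemma conn_Aset f m : config_connected (Aset f m).
Proof.
move=> a b /imsetP[i _ ->] /imsetP[j _ ->].
have hi : (val i <= m)%N by rewrite -ltnS ltn_ord.
have hj : (val j <= m)%N by rewrite -ltnS ltn_ord.
apply: connect_trans (proj2 (conn0 f m _ hi)) (proj1 (conn0 f m _ hj)).
Qed.

Lemma norm_Aset f m : normalized (Aset f m).
Proof.
by split; exists (node f m 0); rewrite node_in //= inordK.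
Qed.

Definition shift (v d : pt) (t : nat) : pt := (v.1 + (Posz t) * d.1, v.2 + (Posz t) * d.2)%R.

Lemma shiftS v d t : shift v d t.+1 = addp (shift v d t) d.
Proof.
rewrite /shift /addp /=; congr pair;
by rewrite -addn1 PoszD mulrDl mul1r addrA.
Qed.

Lemma shift0 v d : shift v d 0 = v.
Proof. by case: v => x y; rewrite /shift /= !mul0r !addr0. Qed.

Lemma ray f m v : ~~ occ (Aset f m) v ->
  exists d : pt, (d = dir 2 \/ d = dir 5) /\ forall t : nat, ~~ occ (Aset f m) (shift v d t).
Proof.
case: v => x y hv.
case: (boolP [exists k : 'I_m.+1, Posz k == (x + y)%R]).
  case/existsP => -[k hkk] /eqP /= hk.
  have hpk := pxy f k.
  have hne : x <> Posz (px f k).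
    move=> ex; move/negP: hv; apply; apply/occP; exists k => //.
    rewrite /P ex; congr pair; lia.
  case: (boolP (x < Posz (px f k))%R) => hx.
    exists (dir 2); split; first by left.
    move=> t; apply/negP => /occP[k' hk' e].
    have hpk' := pxy f k'.
    move: e; rewrite /shift /P /= => -[e1 e2].
    have ek : k' = k by lia.
    subst k'; lia.
  exists (dir 5); split; first by right.
  move=> t; apply/negP => /occP[k' hk' e].
  have hpk' := pxy f k'.
  move: e; rewrite /shift /P /= => -[e1 e2].
  have ek : k' = k by lia.
  subst k'; lia.
move=> hn; exists (dir 5); split; first by right.
move=> t; apply/negP => /occP[k' hk' e].
have hpk' := pxy f k'.
move: e; rewrite /shift /P /= => -[e1 e2].
move/negP: hn; apply; apply/existsP; exists (Ordinal hk'); apply/eqP => /=; lia.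
Qed.

Lemma reach_shift f m v d : (d = dir 2 \/ d = dir 5) ->
  (forall t : nat, ~~ occ (Aset f m) (shift v d t)) ->
  forall t, free_reach (Aset f m) v (shift v d t).
Proof.
move=> hd hocc t; split; first by have := hocc 0%N; rewrite shift0.
exists [seq shift v d i | i <- iota 1 t].
suff : forall j, path (fun x y => adj x y && ~~ occ (Aset f m) y) (shift v d j)
          [seq shift v d i | i <- iota j.+1 t] /\
        last (shift v d j) [seq shift v d i | i <- iota j.+1 t] = shift v d (j + t).
  by move/(_ 0%N); rewrite shift0.
elim: t => [|t IH] j; first by rewrite addn0.
rewrite /= hocc andbT; have [h1 h2] := IH j.+1; rewrite h1 h2 addSnnS; split => //.
rewrite andbT; apply/existsP; case: hd => ->.
  by exists (inord 2); rewrite inordK // shiftS.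
by exists (inord 5); rewrite inordK // shiftS.
Qed.

Lemma shift_inj v d : (d = dir 2 \/ d = dir 5) -> injective (shift v d).
Proof.
move=> hd t t' /(congr1 fst); rewrite /shift /=.
case: hd => -> /= /addrI; lia.
Qed.

Lemma hole_Aset f m : hole_free (Aset f m).
Proof.
move=> v hv [s hs].
have [d [hd hocc]] := ray f m v hv.
have := @uniq_leq_size _ [seq shift v d i | i <- iota 0 (size s).+1] s.
rewrite map_inj_uniq ?iota_uniq; last exact: shift_inj.
rewrite size_map size_iota ltnn => /(_ isT) H; suff : false by []; apply: H.
move=> w /mapP[t _ ->]; apply: hs; exact: reach_shift.
Qed.

Lemma omega_Aset f m : inOmega (Aset f m).
Proof.
split; first by rewrite card_Aset.
split; first exact: norm_Aset.
split; first exact: conn_Aset.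
exact: hole_Aset.
Qed.



Lemma P_eq {f g m} : Aset f m = Aset g m -> forall k, (k <= m)%N -> P f k = P g k.
Proof.
move=> E k hk.
have : occ (Aset g m) (P f k) by rewrite -E; apply/occP; exists k.
case/occP => k' hk' e.
have h1 := pxy f k; have h2 := pxy g k'.
have ek : k = k' by move: e; rewrite /P => -[e1 e2]; lia.
by subst k'.
Qed.

Definition ft {m} (t : m.-tuple bool) : nat -> bool := fun i => nth false t i.

Lemma Aset_inj m : injective (fun t : m.-tuple bool => Aset (ft t) m).
Proof.
move=> t t' /= E; apply: val_inj; apply: (@eq_from_nth _ false); rewrite ?size_tuple // => i hi.
have := P_eq E (i.+1) hi; rewrite !P_succ (P_eq E _ (ltnW hi)) => /addp_inj.
move/dir_inj; rewrite /ft; case: (nth false t i); case: (nth false t' i) => //= /(_ isT isT) //.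
Qed.

Local Open Scope ring_scope.

Theorem lemma18 (R : realType) (lam : R) (n : nat) :
  0 < lam -> (1 <= n)%N ->
  (Num.sqrt 2 / lam) ^+ (2 * n - 2)%N
    <= \sum_(A : {set Box n} | `[< inOmega A >]) lam ^- perim A.
Proof.
move=> hl; case: n => // m _.
set G := [set Aset (ft t) m | t : m.-tuple bool].
rewrite (bigID (fun A => A \in G)) /=.
apply: le_trans (_ : _ <= \sum_(A in G) lam ^- perim A) _; last first.
  have -> : \sum_(A | `[< inOmega A >] && (A \in G)) lam ^- perim A =
            \sum_(A in G) lam ^- perim A.
    apply: eq_bigl => A; case: (boolP (A \in G)) => [/imsetP[t _ ->]|]; rewrite ?andbF ?andbT //.
    by apply/asboolP; apply: omega_Aset.
  rewrite lerDl; apply: sumr_ge0 => A _; rewrite invr_ge0 exprn_ge0 // ltW //.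
rewrite (eq_bigr (fun _ => lam ^- (2 * m))); last first.
  by move=> A /imsetP[t _ ->]; rewrite perim_Aset.
rewrite sumr_const card_imset; last exact: Aset_inj.
rewrite card_tuple card_bool.
have -> : (2 * m.+1 - 2 = 2 * m)%N by lia.
rewrite exprMn exprVn exprM sqr_sqrtr ?ler0n // -[X in _ <= X]mulr_natl natrX; exact: lexx.
Qed.
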